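(* Let $D_1, D_2, D_3$ be pairwise disjoint finite sets with $|D_1|=|D_2|=|D_3|=n$, and let $S=\{p_1,\dots,p_d\}$ be a set of $d \ge n$ distinct points of $D_1\times D_2\times D_3$. Let $m$ be an integer with $3 \le m \le 3n$. Construct the table $\mathcal{T}$ described in the context. Then there exists $S' \subseteq S$ with $|S'|=n$ such that no two points of $S'$ share a coordinate on any dimension (i.e., 3-dimensional matching on $S$ answers ``yes'') if and only if there is a $3$-diverse generalization of $\mathcal{T}$ with exactly $3n(d-1)$ stars.
   Context: Generalization and diversity: a microdata table is a multiset of tuples over categorical quasi-identifier (QI) attributes $A_1,\dots,A_d$ and a sensitive attribute (SA) $B$. A set $S$ of tuples is $l$-eligible if at most $|S|/l$ of its tuples share any identical SA value. A partition of the table into QI-groups defines a generalization: in each group, an attribute $A_i$ keeps its value if all tuples of the group agree on it, otherwise every tuple's $A_i$ value in that group is replaced by a star; SA values are kept. The generalization is $l$-diverse if every QI-group is $l$-eligible. Construction of $\mathcal{T}$: enumerate $D_1=\{v_1,\dots,v_n\}$, $D_2=\{v_{n+1},\dots,v_{2n}\}$, $D_3=\{v_{2n+1},\dots,v_{3n}\}$. For $j \in [1,3n]$ define an integer $u_j$: $u_j=j$ if $j \le m-2$; for $j \ge m-1$: if $m-1>2n$, $u_j=m-1$ for $j\in[m-1,3n-1]$ and $u_{3n}=m$; if $2n \ge m-1 > n$, $u_j=m-1$ for $j \in [m-1,2n]$ and $u_j=m$ for $j\in[2n+1,3n]$; if $n \ge m-1$, $u_j=m-2$ for $j\in[m-1,n]$,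 $u_j=m-1$ for $j\in[n+1,2n]$, $u_j=m$ for $j \in [2n+1,3n]$. The table $\mathcal{T}$ has QI attributes $A_1,\dots,A_d$ (with $A_i$ corresponding to $p_i$), SA $B$, and $3n$ rows $t_1,\dots,t_{3n}$, where $t_j[B]=u_j$ and, for each $i\in[1,d]$, $t_j[A_i]=0$ if $v_j$ is a coordinate of $p_i$, and $t_j[A_i]=u_j$ otherwise. *)

(* Defs.v *)
From mathcomp Require Import all_boot.
Set Implicit Arguments. Unset Strict Implicit. Unset Printing Implicit Defensive.

(* Rows t_1..t_{3n} are indexed by j : 'I_(3*n), representing row number j.+1.
   QI attributes A_1..A_d are indexed by i : 'I_d. Attribute values are nats. *)

(* The sensitive value u_j (1-based j), as in the paper. *)
Definition u (n m j : nat) : nat :=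
  if j <= m - 2 then j
  else if 2 * n < m - 1 then (if j <= 3 * n - 1 then m - 1 else m)
  else if n < m - 1 then (if j <= 2 * n then m - 1 else m)
  else if j <= n then m - 2
  else if j <= 2 * n then m - 1
  else m.

Definition tA {T : eqType} {d : nat} (n m : nat) (v : nat -> T) (p : 'I_d -> T * T * T)
  (j : 'I_(3 * n)) (i : 'I_d) : nat :=
  let jj := (nat_of_ord j).+1 in
  if [|| v jj == (p i).1.1, v jj == (p i).1.2 | v jj == (p i).2]
  then 0 else u n m jj.

Definition tB (n m : nat) (j : 'I_(3 * n)) : nat := u n m (nat_of_ord j).+1.

Definition l_eligible (N : nat) (l : nat) (B : 'I_N -> nat) (G : {set 'I_N}) : Prop :=
  forall x : nat, l * #|[set j in G | B j == x]| <= #|G|.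

Definition stars (N d : nat) (A : 'I_N -> 'I_d -> nat) (P : {set {set 'I_N}}) : nat :=
  \sum_(G in P) \sum_(i < d)
     (if [forall j in G, forall k in G, A j i == A k i] then 0 else #|G|).

(* An l-diverse generalization, given by a partition of the rows into QI-groups. *)
Definition l_diverse_partition (N : nat) (l : nat) (B : 'I_N -> nat)
  (P : {set {set 'I_N}}) : Prop :=
  partition P [set: 'I_N] /\ (forall G, G \in P -> l_eligible l B G).

Definition has_3DM {T : eqType} {d : nat} (n : nat) (p : 'I_d -> T * T * T) : Prop :=
  exists I : {set 'I_d}, #|I| = n /\
    forall i k, i \in I -> k \in I -> i != k ->
      [/\ (p i).1.1 != (p k).1.1, (p i).1.2 != (p k).1.2 & (p i).2 != (p k).2].

Arguments tA {T d} n m v p j i.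
Arguments tB : clear implicits.

(* Main.v *)
Require Import Defs.
From mathcomp Require Import all_boot zify.
Set Implicit Arguments. Unset Strict Implicit. Unset Printing Implicit Defensive.

Lemma dis (U : finType) (A B : {set U}) x : [disjoint A & B] -> x \in A -> x \in B -> False.
Proof. by move=> h xa; rewrite (disjointFr h xa). Qed.

Lemma u_pos n m jj : 3 <= m -> 0 < jj -> 0 < u n m jj.
Proof. move=> hm hj; rewrite /u; repeat case: ifP => ?; lia. Qed.

Lemma udiff n m jj kk : 3 <= m <= 3 * n -> 1 <= jj -> kk <= 3 * n ->
  (jj <= n < kk) || (jj <= 2 * n < kk) -> u n m jj != u n m kk.
Proof.
move=> hm h1 h2 h3; apply/eqP; rewrite /u.
repeat case: ifP => ?; lia.
Qed.

Section L.
Variables (T : finType) (D1 D2 D3 : {set T}) (n d m : nat)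
  (v : nat -> T) (p : 'I_d -> T * T * T).
Hypotheses (H12 : [disjoint D1 & D2]) (H13 : [disjoint D1 & D3]) (H23 : [disjoint D2 & D3])
  (c1 : #|D1| = n) (c2 : #|D2| = n) (c3 : #|D3| = n)
  (hv1 : forall j, 1 <= j <= n -> v j \in D1)
  (hv2 : forall j, n < j <= 2 * n -> v j \in D2)
  (hv3 : forall j, 2 * n < j <= 3 * n -> v j \in D3)
  (vinj : forall j k, 1 <= j <= 3 * n -> 1 <= k <= 3 * n -> v j = v k -> j = k)
  (pinj : injective p)
  (pD : forall i, [/\ (p i).1.1 \in D1, (p i).1.2 \in D2 & (p i).2 \in D3])
  (nd : n <= d) (hm : 3 <= m <= 3 * n).

Local Notation N := (3 * n).

Definition isc (i : 'I_d) (j : 'I_N) : bool :=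
  [|| v j.+1 == (p i).1.1, v j.+1 == (p i).1.2 | v j.+1 == (p i).2].
Definition iscset i := [set j | isc i j].
Definition agree (G : {set 'I_N}) i :=
  [forall j in G, forall k in G, tA n m v p j i == tA n m v p k i].
Definition elig (G : {set 'I_N}) := l_eligible 3 (tB n m) G.

Lemma tAE j i : tA n m v p j i = if isc i j then 0 else tB n m j.
Proof. by []. Qed.

Lemma tB_pos j : 0 < tB n m j.
Proof. apply: u_pos => //; by case/andP: hm. Qed.

Lemma vinjO : injective (fun j : 'I_N => v j.+1).
Proof.
move=> j k /vinj h; apply: val_inj => /=.
have := ltn_ord j; have := ltn_ord k => ? ?.
have : j.+1 = k.+1 by apply: h; lia.
by case.
Qed.

Lemma in_trip1 x k : x \in D1 ->
  [|| x == (p k).1.1, x == (p k).1.2 | x == (p k).2] -> x = (p k).1.1.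
Proof.
case: (pD k) => a b c hx /or3P [] /eqP e //; exfalso.
- by apply: (dis H12 hx); rewrite e.
- by apply: (dis H13 hx); rewrite e.
Qed.

Lemma in_trip2 x k : x \in D2 ->
  [|| x == (p k).1.1, x == (p k).1.2 | x == (p k).2] -> x = (p k).1.2.
Proof.
case: (pD k) => a b c hx /or3P [] /eqP e //; exfalso.
- by apply: (dis H12 _ hx); rewrite e.
- by apply: (dis H23 hx); rewrite e.
Qed.

Lemma in_trip3 x k : x \in D3 ->
  [|| x == (p k).1.1, x == (p k).1.2 | x == (p k).2] -> x = (p k).2.
Proof.
case: (pD k) => a b c hx /or3P [] /eqP e //; exfalso.
- by apply: (dis H13 _ hx); rewrite e.
- by apply: (dis H23 _ hx); rewrite e.
Qed.

Lemma rowD (r : 'I_N) :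
  [\/ r < n /\ v r.+1 \in D1, n <= r < 2 * n /\ v r.+1 \in D2 | 2 * n <= r /\ v r.+1 \in D3].
Proof.
have := ltn_ord r => h.
case: (ltnP r n) => h1; first by apply: Or31; split => //; apply: hv1; lia.
case: (ltnP r (2 * n)) => h2; first by apply: Or32; split; [lia | apply: hv2; lia].
by apply: Or33; split => //; apply: hv3; lia.
Qed.

Lemma hitgen (D : {set T}) k : #|D| = n -> k + n <= 3 * n ->
  (forall j : 'I_n, v (k + j).+1 \in D) -> forall x, x \in D -> exists r : 'I_N, v r.+1 = x.
Proof.
move=> cD hk hD x xD.
pose g := fun j : 'I_n => v (k + j).+1.
have ginj : injective g.
  move=> j1 j2 /vinj h; apply: val_inj => /=.
  have := ltn_ord j1; have := ltn_ord j2 => ? ?.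
  have : (k + j1).+1 = (k + j2).+1 by apply: h; lia.
  lia.
have e : g @: setT = D.
  apply/eqP; rewrite eqEcard card_imset // cardsT card_ord cD leqnn andbT.
  by apply/subsetP => y /imsetP [j _ ->]; apply: hD.
move: xD; rewrite -e => /imsetP [j _ ->].
have hj : k + j < 3 * n by have := ltn_ord j; lia.
by exists (Ordinal hj).
Qed.

Lemma hit x : x \in D1 \/ x \in D2 \/ x \in D3 -> exists r : 'I_N, v r.+1 = x.
Proof.
case=> [|[]] hx.
- apply: (@hitgen D1 0) => // [|j]; first lia.
  by apply: hv1; have := ltn_ord j; lia.
- apply: (@hitgen D2 n) => // [|j]; first lia.
  by apply: hv2; have := ltn_ord j; lia.
- apply: (@hitgen D3 (2 * n)) => // [|j]; first lia.
  by apply: hv3; have := ltn_ord j; lia.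
Qed.

Lemma Lsub i k : {subset iscset i <= iscset k} -> i = k.
Proof.
move=> sub; apply: pinj.
case: (pD i) => a b c.
have e1 : (p i).1.1 = (p k).1.1.
  have [r hr] := hit (or_introl a).
  have : r \in iscset k by apply: sub; rewrite inE /isc hr eqxx.
  by rewrite inE /isc hr; apply: in_trip1.
have e2 : (p i).1.2 = (p k).1.2.
  have [r hr] := hit (or_intror (or_introl b)).
  have : r \in iscset k by apply: sub; rewrite inE /isc hr eqxx orbT.
  by rewrite inE /isc hr; apply: in_trip2.
have e3 : (p i).2 = (p k).2.
  have [r hr] := hit (or_intror (or_intror c)).
  have : r \in iscset k by apply: sub; rewrite inE /isc hr eqxx !orbT.
  by rewrite inE /isc hr; apply: in_trip3.
move: e1 e2 e3; case: (p i) => [[? ?] ?]; case: (p k) => [[? ?] ?] /= -> -> ->.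
by [].
Qed.

Lemma L2 i : #|iscset i| <= 3.
Proof.
rewrite -(card_imset _ vinjO).
apply: (@leq_trans #|[set (p i).1.1; (p i).1.2; (p i).2]|).
  apply: subset_leq_card; apply/subsetP => y /imsetP [j]; rewrite inE /isc => h ->.
  by rewrite /= !inE -orbA.
rewrite -setUA !cardsU1 cards1.
by case: (_ \notin _); case: (_ \notin _).
Qed.

Lemma L4 G : G != set0 -> elig G -> 3 <= #|G|.
Proof.
case/set0Pn => j0 j0G /(_ (tB n m j0)) h.
have : 0 < #|[set j in G | tB n m j == tB n m j0]|.
  by apply/card_gt0P; exists j0; rewrite inE j0G eqxx.
lia.
Qed.

Lemma L3 G i : G != set0 -> elig G -> agree G i -> G \subset iscset i.
Proof.
move=> G0 hel hag; have := G0; case/set0Pn => j0 j0G.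
have ag k : k \in G -> tA n m v p k i = tA n m v p j0 i.
  move=> kG; move/forall_inP: hag => /(_ k kG) /forall_inP /(_ j0 j0G).
  by move/eqP.
case: (boolP (isc i j0)) => hj0.
  apply/subsetP => k kG; rewrite inE.
  have := ag k kG; rewrite !tAE hj0; case: (isc i k) => //.
  by move=> e; have := tB_pos k; rewrite e.
exfalso.
have eqG : [set j in G | tB n m j == tB n m j0] = G.
  apply/setP => k; rewrite inE; case: (boolP (k \in G)) => //= kG.
  have := ag k kG; rewrite !tAE (negbTE hj0); case: (isc i k) => e.
    by have := tB_pos j0; rewrite -e.
  by rewrite e eqxx.
have := hel (tB n m j0); rewrite eqG.
have : 0 < #|G| by apply/card_gt0P; exists j0.
lia.
Qed.

Lemma Leq G i : G != set0 -> elig G -> agree G i -> G = iscset i.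
Proof.
move=> G0 hel hag; apply/eqP; rewrite eqEcard L3 //=.
by apply: leq_trans (L2 i) (L4 G0 hel).
Qed.

Lemma uniq_agree G i k : G != set0 -> elig G -> agree G i -> agree G k -> i = k.
Proof.
move=> G0 hel hi hk; apply: Lsub => r.
rewrite -(Leq G0 hel hi) => rG.
by move/subsetP: (L3 G0 hel hk) => /(_ r rG).
Qed.

Lemma n_pos : 0 < n.
Proof. lia. Qed.

Definition sG (G : {set 'I_N}) := \sum_(i < d) (if agree G i then 0 else #|G|).
Definition eG (G : {set 'I_N}) := if [exists i, agree G i] then 0 else #|G|.

Lemma sG_formula G : G != set0 -> elig G -> sG G = (d - 1) * #|G| + eG G.
Proof.
move=> G0 hel; rewrite /sG /eG.
case: existsP => [[i0 h0]|hn].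
  rewrite (bigD1 i0) //= h0 add0n addn0.
  rewrite (eq_bigr (fun _ => #|G|)); last first.
    move=> i hi; case: ifP => // hi'.
    by rewrite (uniq_agree G0 hel hi' h0) eqxx in hi.
  by rewrite sum_nat_const cardC1 card_ord subn1.
rewrite (eq_bigr (fun _ => #|G|)); last first.
  by move=> i _; case: ifP => // h; case: hn; exists i.
rewrite sum_nat_const card_ord.
have : 0 < d by have := n_pos; lia.
case: d => // d' _; rewrite subSS subn0 mulSn addnC //.
Qed.

Lemma stars_eq P : partition P [set: 'I_N] -> (forall G, G \in P -> elig G) ->
  stars (tA n m v p) P = (d - 1) * (3 * n) + \sum_(G in P) eG G.
Proof.
move=> hP hel.
have G0 G : G \in P -> G != set0.
  by move=> GP; apply/eqP => e; case/and3P: hP => _ _; rewrite -e GP.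
rewrite /stars (eq_bigr (fun G : {set 'I_N} => (d - 1) * #|G| + eG G)); last first.
  by move=> G GP; rewrite -sG_formula //; [apply: G0 | apply: hel].
by rewrite big_split /= -big_distrr -(card_partition hP) cardsT card_ord.
Qed.

Lemma elig_isc i : elig (iscset i).
Proof.
case: (pD i) => a b c.
have [r1 h1] := hit (or_introl a).
have [r2 h2] := hit (or_intror (or_introl b)).
have [r3 h3] := hit (or_intror (or_intror c)).
have ne x y (X Y : {set T}) (r s : 'I_N) : [disjoint X & Y] -> v r.+1 = x -> v s.+1 = y ->
    x \in X -> y \in Y -> r != s.
  move=> hd hr hs hx hy; apply/eqP => e; subst s; subst x.
  by apply: (dis hd hx); rewrite hs.
have n12 := ne _ _ _ _ _ _ H12 h1 h2 a b.
have n13 := ne _ _ _ _ _ _ H13 h1 h3 a c.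
have n23 := ne _ _ _ _ _ _ H23 h2 h3 b c.
have card3 : 3 <= #|iscset i|.
  apply: (@leq_trans #|[set r1; r2; r3]|).
    rewrite -setUA !cardsU1 cards1 !inE negb_or n12 n13 n23 //.
  apply: subset_leq_card; apply/subsetP => r; rewrite !inE /isc.
  by case/orP => [/orP []|] /eqP ->; rewrite ?h1 ?h2 ?h3 eqxx ?orbT.
have blk (r : 'I_N) : isc i r ->
    [\/ r < n /\ v r.+1 = (p i).1.1, n <= r < 2 * n /\ v r.+1 = (p i).1.2
      | 2 * n <= r /\ v r.+1 = (p i).2].
  move=> hr; case: (rowD r) => [[x y]|[x y]|[x y]].
  - by apply: Or31; split => //; apply: in_trip1.
  - by apply: Or32; split => //; apply: in_trip2.
  - by apply: Or33; split => //; apply: in_trip3.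
have key (j k : 'I_N) : isc i j -> isc i k -> tB n m j = tB n m k -> j = k.
  move=> hj hk e.
  have lj := ltn_ord j; have lk := ltn_ord k.
  have ud (x y : 'I_N) : (x < n <= y) || (x < 2 * n <= y) -> tB n m x != tB n m y.
    move=> hxy; apply: udiff => //; have := ltn_ord y; lia.
  case: (blk j hj) => [[bj vj]|[bj vj]|[bj vj]];
  case: (blk k hk) => [[bk vk]|[bk vk]|[bk vk]];
  try (by apply: vinjO; rewrite /= vj vk);
  exfalso.
  - by move: (ud j k ltac:(clear -bj bk; lia)); rewrite e eqxx.
  - by move: (ud j k ltac:(clear -bj bk; lia)); rewrite e eqxx.
  - by move: (ud k j ltac:(clear -bj bk; lia)); rewrite e eqxx.
  - by move: (ud j k ltac:(clear -bj bk; lia)); rewrite e eqxx.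
  - by move: (ud k j ltac:(clear -bj bk; lia)); rewrite e eqxx.
  - by move: (ud k j ltac:(clear -bj bk; lia)); rewrite e eqxx.
move=> x.
have : #|[set j in iscset i | tB n m j == x]| <= 1.
  apply/card_le1_eqP => j k; rewrite !inE => /andP [hj /eqP ej] /andP [hk /eqP ek].
  by apply: key => //; rewrite ej ek.
move=> h; exact: leq_trans (leq_mul (leqnn 3) h) card3.
Qed.

Lemma agree_isc i : agree (iscset i) i.
Proof.
apply/forall_inP => j; rewrite inE => hj; apply/forall_inP => k; rewrite inE => hk.
by rewrite !tAE hj hk.
Qed.

Lemma isc_ne i : iscset i != set0.
Proof.
case: (pD i) => a _ _; have [r h] := hit (or_introl a).
by apply/set0Pn; exists r; rewrite inE /isc h eqxx.
Qed.

Lemma proj_surj (f : T * T * T -> T) (D : {set T}) (I : {set 'I_d}) :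
  #|D| = n -> #|I| = n -> (forall i, f (p i) \in D) ->
  (forall i k, i \in I -> k \in I -> i != k -> f (p i) != f (p k)) ->
  forall x, x \in D -> exists2 i, i \in I & f (p i) = x.
Proof.
move=> cD cI hD hI x xD.
have e : [set f (p i) | i in I] = D.
  apply/eqP; rewrite eqEcard cD card_in_imset ?cI ?leqnn ?andbT.
    by apply/subsetP => y /imsetP [j _ ->].
  move=> i k hi hk e; case: (eqVneq i k) => // ne.
  by move: (hI i k hi hk ne); rewrite /= e eqxx.
by move: xD; rewrite -e => /imsetP [j hj ->]; exists j.
Qed.

Lemma forward : has_3DM n p -> exists P : {set {set 'I_N}},
    l_diverse_partition 3 (tB n m) P /\ stars (tA n m v p) P = 3 * n * (d - 1).
Proof.
case=> I [cI hI].
pose P := [set iscset i | i in I].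
have hel G : G \in P -> elig G by case/imsetP => i _ ->; apply: elig_isc.
have disj i k : i \in I -> k \in I -> i != k -> [disjoint iscset i & iscset k].
  move=> hi hk ne; rewrite -setI_eq0; apply/eqP/setP => r; rewrite !inE.
  apply/negbTE/negP => /andP [ri rk].
  case: (hI i k hi hk ne) => /negP n1 /negP n2 /negP n3.
  case: (rowD r) => [[_ y]|[_ y]|[_ y]].
  - by apply: n1; rewrite -(in_trip1 y ri) -(in_trip1 y rk).
  - by apply: n2; rewrite -(in_trip2 y ri) -(in_trip2 y rk).
  - by apply: n3; rewrite -(in_trip3 y ri) -(in_trip3 y rk).
have hP : partition P [set: 'I_N].
  apply/and3P; split.
  - apply/eqP/setP => r; rewrite inE; apply/bigcupP.
    have [i hi hr] : exists2 i, i \in I & isc i r.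
      case: (rowD r) => [[_ y]|[_ y]|[_ y]].
      + have [i hi e] := @proj_surj (fun t => t.1.1) D1 I c1 cI
          (fun i => let: And3 a _ _ := pD i in a)
          (fun i k hi hk ne => let: And3 a _ _ := hI i k hi hk ne in a) _ y.
        by exists i => //; rewrite /isc e eqxx.
      + have [i hi e] := @proj_surj (fun t => t.1.2) D2 I c2 cI
          (fun i => let: And3 _ a _ := pD i in a)
          (fun i k hi hk ne => let: And3 _ a _ := hI i k hi hk ne in a) _ y.
        by exists i => //; rewrite /isc e eqxx orbT.
      + have [i hi e] := @proj_surj (fun t => t.2) D3 I c3 cI
          (fun i => let: And3 _ _ a := pD i in a)
          (fun i k hi hk ne => let: And3 _ _ a := hI i k hi hk ne in a) _ y.
        by exists i => //; rewrite /isc e eqxx !orbT.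
    by exists (iscset i); [apply: imset_f | rewrite inE].
  - apply/trivIsetP => A B /imsetP [i hi ->] /imsetP [k hk ->] ne.
    apply: disj => //; apply: contraNneq ne => ->; by [].
  - apply/imsetP => [[i _ e]]; have := isc_ne i; by rewrite -e eqxx.
exists P; split; first by split.
rewrite stars_eq // big1 ?addn0; first exact: mulnC.
move=> G /imsetP [i _ ->].
by rewrite /eG; case: existsP => // [[]]; exists i; apply: agree_isc.
Qed.

Lemma backward P : l_diverse_partition 3 (tB n m) P ->
  stars (tA n m v p) P = 3 * n * (d - 1) -> has_3DM n p.
Proof.
case=> hP hel hs.
rewrite stars_eq // mulnC in hs.
have G0 G : G \in P -> G != set0.
  by move=> GP; apply/eqP => e; case/and3P: hP => _ _; rewrite -e GP.
have e0 G : G \in P -> eG G = 0.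
  move=> GP; move: hs; rewrite (bigD1 G) //=; lia.
have ex G : G \in P -> exists i, G = iscset i.
  move=> GP; have := e0 G GP; rewrite /eG; case: existsP => [[i hi] _|_ h].
    by exists i; apply: Leq => //; [apply: G0 | apply: hel].
  by have := L4 (G0 G GP) (hel G GP); rewrite h.
pose I := [set i | iscset i \in P].
exists I; split.
  have e : [set iscset i | i in I] = P.
    apply/setP => G; apply/imsetP/idP => [[i]|GP]; first by rewrite inE => h ->.
    by have [i ei] := ex G GP; exists i; rewrite ?inE -ei.
  have sz G : G \in P -> #|G| = 3.
    move=> GP; have [i ei] := ex G GP; apply/eqP; rewrite eqn_leq.
    rewrite {1}ei L2 /=; apply: L4; [exact: G0 | exact: hel].
  have cP : #|P| = n.
    have := card_partition hP; rewrite cardsT card_ord (eq_bigr (fun _ => 3)) //.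
    rewrite sum_nat_const; lia.
  rewrite -cP -e card_imset //.
  by move=> i k eik; apply: Lsub => r; rewrite eik.
move=> i k; rewrite !inE => hi hk ne.
have share r : isc i r -> isc k r -> False.
  move=> ri rk.
  have nik : iscset i != iscset k.
    by apply: contraNneq ne => eik; apply/eqP; apply: Lsub => s; rewrite eik.
  case/and3P: hP => _ /trivIsetP /(_ _ _ hi hk nik) hd _.
  by apply: (dis hd (x := r)); rewrite inE.
case: (pD i) => a b c.
split; apply/negP => /eqP e.
- have [r hr] := hit (or_introl a).
  by apply: (share r); rewrite /isc hr ?e eqxx.
- have [r hr] := hit (or_intror (or_introl b)).
  by apply: (share r); rewrite /isc hr ?e eqxx orbT.
- have [r hr] := hit (or_intror (or_intror c)).
  by apply: (share r); rewrite /isc hr ?e eqxx !orbT.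
Qed.

Lemma main : has_3DM n p <->
  exists P : {set {set 'I_N}},
    l_diverse_partition 3 (tB n m) P /\ stars (tA n m v p) P = 3 * n * (d - 1).
Proof.
split; first exact: forward.
by case=> P [h1 h2]; apply: (backward h1 h2).
Qed.

End L.

Theorem lemma3 (T : finType) (D1 D2 D3 : {set T}) (n d m : nat)
  (v : nat -> T) (p : 'I_d -> T * T * T) :
  [disjoint D1 & D2] -> [disjoint D1 & D3] -> [disjoint D2 & D3] ->
  #|D1| = n -> #|D2| = n -> #|D3| = n ->
  (forall j, 1 <= j <= n -> v j \in D1) ->
  (forall j, n < j <= 2 * n -> v j \in D2) ->
  (forall j, 2 * n < j <= 3 * n -> v j \in D3) ->
  (forall j k, 1 <= j <= 3 * n -> 1 <= k <= 3 * n -> v j = v k -> j = k) ->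
  injective p ->
  (forall i, [/\ (p i).1.1 \in D1, (p i).1.2 \in D2 & (p i).2 \in D3]) ->
  n <= d ->
  3 <= m <= 3 * n ->
  has_3DM n p <->
  exists P : {set {set 'I_(3 * n)}},
    l_diverse_partition 3 (tB n m) P /\
    stars (tA n m v p) P = 3 * n * (d - 1).
Proof.
move=> H12 H13 H23 c1 c2 c3 hv1 hv2 hv3 vinj pinj pD nd hm.
exact: (main H12 H13 H23 c1 c2 c3 hv1 hv2 hv3 vinj pinj pD nd hm).
Qed.
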